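(* Let $\{P^{(b)}\}_{b=1}^{d_A+1}$, $P^{(b)}=\{P^{(b)}_n\}_{n=1}^{d_A}$, be MUMs on $\mathbb{C}^{d_A}$ with parameter $\kappa_A$, and $\{Q^{(b')}\}_{b'=1}^{d_B+1}$, $Q^{(b')}=\{Q^{(b')}_{n'}\}_{n'=1}^{d_B}$, MUMs on $\mathbb{C}^{d_B}$ with parameter $\kappa_B$. Let $\mu,\nu\in\mathbb{R}$ and $l$ a positive integer. If a state $\rho_{AB}$ on $\mathbb{C}^{d_A}\otimes\mathbb{C}^{d_B}$ is separable, then $$\left\|\mathcal{M}^l_{\mu,\nu}(\rho_{AB})\right\|_{\mathrm{tr}}\le\sqrt{(l\mu^2+1+\kappa_A)(l\nu^2+1+\kappa_B)},$$ where $$\mathcal{M}^l_{\mu,\nu}(\rho_{AB})=\begin{pmatrix}\mu\nu J_{l\times l}&\mu\,\omega_l(\eta)^T\\ \nu\,\omega_l(\theta)&\mathcal{J}(\rho_{AB})\end{pmatrix}.$$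
   Context: MUMs (mutually unbiased measurements) on $\mathbb{C}^d$: a set of $d+1$ POVMs $\{P^{(b)}\}_{b=1}^{d+1}$, $P^{(b)}=\{P^{(b)}_n\}_{n=1}^d$ (positive semidefinite, $\sum_nP^{(b)}_n=I_d$), with $\mathrm{tr}(P^{(b)}_n)=1$, $\mathrm{tr}((P^{(b)}_n)^2)=\kappa$, $\mathrm{tr}(P^{(b)}_nP^{(b)}_{n'})=\frac{1-\kappa}{d-1}$ for $n\ne n'$, and $\mathrm{tr}(P^{(b)}_nP^{(b')}_{n'})=\frac1d$ for $b\ne b'$, where $\frac1d<\kappa\le1$. A state is separable if it is a convex combination of product states. $\rho_A,\rho_B$ are reduced states. $\theta\in\mathbb{R}^{d_A(d_A+1)}$ has entries $\mathrm{tr}(P^{(b)}_n\rho_A)$ and $\eta\in\mathbb{R}^{d_B(d_B+1)}$ has entries $\mathrm{tr}(Q^{(b')}_{n'}\rho_B)$, ordered lexicographically by $(b,n)$ resp. $(b',n')$. $\mathcal{J}(\rho_{AB})$ is the matrix with entries $\mathrm{tr}[(P^{(b)}_n\otimes Q^{(b')}_{n'})\rho_{AB}]$, row index $(b,n)$, column index $(b',n')$, in the same order. $J_{l\times l}$ is the $l\times l$ all-ones matrix; for a column vector $X$, $\omega_l(X)=(X,\dots,X)$ has $l$ columns equal to $X$. $\|G\|_{\mathrm{tr}}=\mathrm{tr}\sqrt{G^\dagger G}$. *)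

(* Defs.v *)
From mathcomp Require Import all_boot all_order all_algebra.
From mathcomp Require Import reals.
From mathcomp.real_closed Require Export complex mxtens.

Set Implicit Arguments.
Unset Strict Implicit.
Unset Printing Implicit Defensive.

Import Order.TTheory GRing.Theory Num.Theory.
Local Open Scope ring_scope.
Local Open Scope complex_scope.

Section Defs.
Variable R : realType.
Local Notation C := R[i].

Definition adj m n (A : 'M[C]_(m, n)) : 'M[C]_(n, m) := (map_mx Num.conj A)^T.

(* positive semidefinite (over C this also forces Hermiticity) *)
Definition psd n (A : 'M[C]_n) : Prop :=
  forall x : 'cV[C]_n, 0 <= (adj x *m A *m x) 0 0.

Definition is_state n (A : 'M[C]_n) : Prop := psd A /\ \tr A = 1.

Definition is_MUM d (kappa : R) (P : 'I_d.+1 -> 'I_d -> 'M[C]_d) : Prop :=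
  [/\ (d%:R)^-1 < kappa /\ kappa <= 1,
      (forall b n, psd (P b n)) /\ (forall b, \sum_(n < d) P b n = 1%:M),
      (forall b n, \tr (P b n) = 1),
      (forall b n, \tr (P b n *m P b n) = kappa%:C) /\
      (forall b n n', n != n' ->
          \tr (P b n *m P b n') = ((1 - kappa) / (d%:R - 1))%:C) &
      (forall b b' n n', b != b' -> \tr (P b n *m P b' n') = ((d%:R)^-1)%:C)].

(* C^dA (x) C^dB is indexed by mxtens_index (i, j) = i * dB + j, as for tensmx *)
Definition ptraceB dA dB (rho : 'M[C]_(dA * dB)) : 'M[C]_dA :=
  \matrix_(i, i') \sum_(j < dB) rho (mxtens_index (i, j)) (mxtens_index (i', j)).

Definition ptraceA dA dB (rho : 'M[C]_(dA * dB)) : 'M[C]_dB :=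
  \matrix_(j, j') \sum_(i < dA) rho (mxtens_index (i, j)) (mxtens_index (i, j')).

Definition separable dA dB (rho : 'M[C]_(dA * dB)) : Prop :=
  exists (k : nat) (p : 'I_k -> R) (s : 'I_k -> 'M[C]_dA) (t : 'I_k -> 'M[C]_dB),
    [/\ (forall i, 0 <= p i), \sum_(i < k) p i = 1,
        (forall i, is_state (s i) /\ is_state (t i)) &
        rho = \sum_(i < k) (p i)%:C *: (s i *t t i)].

(* theta, eta, J(rho); the index (b, n) is encoded lexicographically as b * d + n *)
Definition theta_vec dA dB (P : 'I_dA.+1 -> 'I_dA -> 'M[C]_dA) (rho : 'M[C]_(dA * dB))
  : 'cV[C]_(dA.+1 * dA) :=
  \col_k \tr (P (mxtens_unindex k).1 (mxtens_unindex k).2 *m ptraceB rho).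

Definition eta_vec dA dB (Q : 'I_dB.+1 -> 'I_dB -> 'M[C]_dB) (rho : 'M[C]_(dA * dB))
  : 'cV[C]_(dB.+1 * dB) :=
  \col_k \tr (Q (mxtens_unindex k).1 (mxtens_unindex k).2 *m ptraceA rho).

Definition Jmat dA dB (P : 'I_dA.+1 -> 'I_dA -> 'M[C]_dA)
  (Q : 'I_dB.+1 -> 'I_dB -> 'M[C]_dB) (rho : 'M[C]_(dA * dB))
  : 'M[C]_(dA.+1 * dA, dB.+1 * dB) :=
  \matrix_(k, k')
    \tr ((P (mxtens_unindex k).1 (mxtens_unindex k).2
          *t Q (mxtens_unindex k').1 (mxtens_unindex k').2) *m rho).

Definition omega m (l : nat) (X : 'cV[C]_m) : 'M[C]_(m, l) := \matrix_(i, j) X i 0.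

Definition Mmat dA dB (P : 'I_dA.+1 -> 'I_dA -> 'M[C]_dA)
  (Q : 'I_dB.+1 -> 'I_dB -> 'M[C]_dB) (mu nu : R) (l : nat) (rho : 'M[C]_(dA * dB))
  : 'M[C]_(l + dA.+1 * dA, l + dB.+1 * dB) :=
  block_mx (const_mx (mu * nu)%:C) ((mu%:C) *: (omega l (eta_vec Q rho))^T)
           ((nu%:C) *: omega l (theta_vec P rho)) (Jmat P Q rho).

(* S is the (positive semidefinite) square root of A; then ||G||_tr = tr S for A = G^dag G *)
Definition psd_sqrt_of n (S A : 'M[C]_n) : Prop := psd S /\ S *m S = A.

End Defs.

(* Main.v *)
Require Import Defs.
From mathcomp Require Import all_boot all_order all_algebra reals.
From mathcomp.real_closed Require Import complex mxtens.
From mathcomp Require Import ring lra.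
Import Order.TTheory GRing.Theory Num.Theory.
Local Open Scope ring_scope.
Local Open Scope complex_scope.
Set Implicit Arguments.
Unset Strict Implicit.
Unset Printing Implicit Defensive.
Section S.
Variable R : realType.
Local Notation C := R[i].
Local Notation re := (@complex.Re R).
Local Notation im := (@complex.Im R).
Lemma conjE (x : C) : Num.conj x = x^*%C. Proof. by []. Qed.
Lemma ReD (x y : C) : re (x + y) = re x + re y. Proof. by case: x => a b; case: y => c d. Qed.
Lemma ImD (x y : C) : im (x + y) = im x + im y. Proof. by case: x => a b; case: y => c d. Qed.
Lemma ReN (x : C) : re (- x) = - re x. Proof. by case: x => a b. Qed.
Lemma ImN (x : C) : im (- x) = - im x. Proof. by case: x=> a b. Qed.
Lemma ReM (x y : C) : re (x * y) = re x * re y - im x * im y. Proof. by case: x => a b; case: y => c d. Qed.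
Lemma ImM (x y : C) : im (x * y) = re x * im y + im x * re y. Proof. by case: x => a b; case: y => c d. Qed.
Lemma Re_conj (x : C) : re (Num.conj x) = re x. Proof. by case: x. Qed.
Lemma Im_conj (x : C) : im (Num.conj x) = - im x. Proof. by case: x. Qed.
Lemma ReR (a : R) : re (a%:C) = a. Proof. by []. Qed.
Lemma ImR (a : R) : im (a%:C) = 0. Proof. by []. Qed.
Lemma Re_sum I (r : seq I) (Pr : pred I) (F : I -> C) :
  re (\sum_(i <- r | Pr i) F i) = \sum_(i <- r | Pr i) re (F i).
Proof. exact: (big_morph _ ReD). Qed.
Lemma Im_sum I (r : seq I) (Pr : pred I) (F : I -> C) :
  im (\sum_(i <- r | Pr i) F i) = \sum_(i <- r | Pr i) im (F i).
Proof. exact: (big_morph _ ImD). Qed.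
Lemma Re_nat n : re (n%:R : C) = n%:R.
Proof. by elim: n => // n IH; rewrite -addn1 !natrD ReD IH. Qed.
Lemma Im_nat n : im (n%:R : C) = 0.
Proof. by elim: n => // n IH; rewrite -addn1 natrD ImD IH add0r. Qed.
Lemma ReMR (a : R) (x : C) : re (a%:C * x) = a * re x.
Proof. by rewrite ReM ReR ImR mul0r subr0. Qed.
Lemma ImMR (a : R) (x : C) : im (a%:C * x) = a * im x.
Proof. by rewrite ImM ReR ImR mul0r addr0. Qed.

Lemma adjE m n (X : 'M[C]_(m,n)) i j : adj X i j = Num.conj (X j i).
Proof. by rewrite /adj !mxE. Qed.
Lemma adjK m n (X : 'M[C]_(m,n)) : adj (adj X) = X.
Proof. by apply/matrixP => i j; rewrite !adjE conjE conjcK. Qed.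
Lemma adjM m n p (X : 'M[C]_(m,n)) (Y : 'M[C]_(n,p)) : adj (X *m Y) = adj Y *m adj X.
Proof. by rewrite /adj map_mxM trmx_mul. Qed.
Lemma adjD m n (X Y : 'M[C]_(m,n)) : adj (X + Y) = adj X + adj Y.
Proof. by apply/matrixP => i j; rewrite !(adjE, mxE) rmorphD. Qed.
Lemma adjZ m n (c : C) (X : 'M[C]_(m,n)) : adj (c *: X) = Num.conj c *: adj X.
Proof. by apply/matrixP => i j; rewrite !(adjE, mxE) rmorphM. Qed.
Lemma adj_sum m n I (r : seq I) (Pr : pred I) (F : I -> 'M[C]_(m,n)) :
  adj (\sum_(i <- r | Pr i) F i) = \sum_(i <- r | Pr i) adj (F i).
Proof. apply: (big_morph (@adj R m n) (@adjD m n)). by apply/matrixP => i j; rewrite !(adjE, mxE) rmorph0. Qed.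
Lemma tr_adj n (X : 'M[C]_n) : \tr (adj X) = Num.conj (\tr X).
Proof. rewrite /mxtrace rmorph_sum; apply: eq_bigr => i _; by rewrite adjE. Qed.

Definition hs m n (X Y : 'M[C]_(m,n)) : R := re (\tr (adj X *m Y)).

Lemma hsE m n (X Y : 'M[C]_(m,n)) :
  hs X Y = \sum_i \sum_j (re (X i j) * re (Y i j) + im (X i j) * im (Y i j)).
Proof.
rewrite /hs /mxtrace Re_sum exchange_big /=; apply: eq_bigr => i _.
rewrite mxE Re_sum; apply: eq_bigr => j _.
by rewrite adjE ReM Re_conj Im_conj mulNr opprK.
Qed.
Lemma hs_ge0 m n (X : 'M[C]_(m,n)) : 0 <= hs X X.
Proof. rewrite hsE; apply: sumr_ge0 => i _; apply: sumr_ge0 => j _; by rewrite -!expr2 addr_ge0 ?sqr_ge0. Qed.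

Lemma hs_eq0 m n (X : 'M[C]_(m,n)) : hs X X = 0 -> X = 0.
Proof.
rewrite hsE => /eqP; rewrite psumr_eq0 => [/allP H|i _]; last first.
  by apply: sumr_ge0 => j _; rewrite -!expr2 addr_ge0 ?sqr_ge0.
apply/matrixP => i j; have /implyP := H i (mem_index_enum _).
rewrite psumr_eq0 => [/(_ isT)/allP/(_ j (mem_index_enum _))|]; last first.
  by move=> k _; rewrite -!expr2 addr_ge0 ?sqr_ge0.
rewrite /= paddr_eq0 -?expr2 ?sqr_ge0 // !sqrf_eq0 mxE => /andP[/eqP h1 /eqP h2].
by case: (X i j) h1 h2 => a b /= -> ->.
Qed.

Lemma CS_real (t a b c d : R) : 0 < t -> 2 * (a * b + c * d) <= t * (a * a + c * c) + t^-1 * (b * b + d * d).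
Proof.
move=> t0; have tn : t != 0 by rewrite gt_eqF.
rewrite -subr_ge0; have -> : t * (a * a + c * c) + t^-1 * (b * b + d * d) - 2 * (a * b + c * d)
   = t^-1 * ((t * a - b) ^+ 2 + (t * c - d) ^+ 2) :> R.
  by field.
apply: mulr_ge0; [by rewrite invr_ge0 ltW | by rewrite addr_ge0 ?sqr_ge0].
Qed.

Lemma hs_CS m n (X Y : 'M[C]_(m,n)) t : 0 < t ->
  2 * hs X Y <= t * hs X X + t^-1 * hs Y Y.
Proof.
move=> t0; rewrite !hsE !mulr_sumr -big_split /=; apply: ler_sum => i _.
rewrite !mulr_sumr -big_split /=; apply: ler_sum => j _; exact: CS_real.
Qed.

Lemma hsC m n (X Y : 'M[C]_(m,n)) : hs X Y = hs Y X.
Proof. rewrite !hsE; apply: eq_bigr => i _; apply: eq_bigr => j _; by rewrite mulrC [im _ * _]mulrC. Qed.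

Lemma hsDr m n (X Y Z : 'M[C]_(m,n)) : hs X (Y + Z) = hs X Y + hs X Z.
Proof. by rewrite /hs mulmxDr mxtraceD ReD. Qed.
Lemma hsDl m n (X Y Z : 'M[C]_(m,n)) : hs (Y + Z) X = hs Y X + hs Z X.
Proof. by rewrite hsC hsDr !(hsC X). Qed.
Lemma hsNr m n (X Y : 'M[C]_(m,n)) : hs X (- Y) = - hs X Y.
Proof. by rewrite /hs mulmxN raddfN ReN. Qed.
Lemma hsNl m n (X Y : 'M[C]_(m,n)) : hs (- Y) X = - hs Y X.
Proof. by rewrite hsC hsNr hsC. Qed.
Lemma hsBr m n (X Y Z : 'M[C]_(m,n)) : hs X (Y - Z) = hs X Y - hs X Z.
Proof. by rewrite hsDr hsNr. Qed.
Lemma hsBl m n (X Y Z : 'M[C]_(m,n)) : hs (Y - Z) X = hs Y X - hs Z X.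
Proof. by rewrite hsDl hsNl. Qed.
Lemma hsZr m n (X Y : 'M[C]_(m,n)) (a : R) : hs X (a%:C *: Y) = a * hs X Y.
Proof. by rewrite /hs -scalemxAr mxtraceZ ReMR. Qed.
Lemma hsZl m n (X Y : 'M[C]_(m,n)) (a : R) : hs (a%:C *: Y) X = a * hs Y X.
Proof. by rewrite hsC hsZr hsC. Qed.
Lemma hs_sumr m n I (r : seq I) (Pr : pred I) (X : 'M[C]_(m,n)) F :
  hs X (\sum_(i <- r | Pr i) F i) = \sum_(i <- r | Pr i) hs X (F i).
Proof.
elim/big_rec2: _ => [|i y1 y2 _ IH]; last by rewrite hsDr IH.
by rewrite /hs mulmx0 mxtrace0.
Qed.
Lemma hs_suml m n I (r : seq I) (Pr : pred I) (X : 'M[C]_(m,n)) F :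
  hs (\sum_(i <- r | Pr i) F i) X = \sum_(i <- r | Pr i) hs (F i) X.
Proof. by rewrite hsC hs_sumr; apply: eq_bigr => i _; rewrite hsC. Qed.
Lemma hs_adj m n (X Y : 'M[C]_(m,n)) : hs (adj X) (adj Y) = hs X Y.
Proof.
rewrite !hsE exchange_big; apply: eq_bigr => i _; apply: eq_bigr => j _.
by rewrite !adjE !Re_conj !Im_conj mulrNN.
Qed.
Lemma hs_tr n (X Y : 'M[C]_n) : adj X = X -> hs X Y = re (\tr (X *m Y)).
Proof. by rewrite /hs => ->. Qed.

Lemma tr1 (M : 'M[C]_1) : \tr M = M 0 0.
Proof. by rewrite /mxtrace big_ord1. Qed.
Lemma hs_vec n (x y : 'cV[C]_n) : hs x y = re ((adj x *m y) 0 0).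
Proof. by rewrite /hs tr1. Qed.

Definition bil n (A : 'M[C]_n) (x y : 'cV[C]_n) := (adj x *m A *m y) 0 0.
Lemma bilDl n (A : 'M[C]_n) x1 x2 y : bil A (x1 + x2) y = bil A x1 y + bil A x2 y.
Proof. by rewrite /bil adjD !mulmxDl mxE. Qed.
Lemma bilDr n (A : 'M[C]_n) x y1 y2 : bil A x (y1 + y2) = bil A x y1 + bil A x y2.
Proof. by rewrite /bil !mulmxDr mxE. Qed.
Lemma bilZl n (A : 'M[C]_n) c x y : bil A (c *: x) y = Num.conj c * bil A x y.
Proof. by rewrite /bil adjZ -!scalemxAl mxE. Qed.
Lemma bilZr n (A : 'M[C]_n) c x y : bil A x (c *: y) = c * bil A x y.
Proof. by rewrite /bil -!scalemxAr mxE. Qed.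
Lemma bil_delta n (A : 'M[C]_n) i j : bil A (delta_mx i 0) (delta_mx j 0) = A i j.
Proof.
rewrite /bil; have -> : adj (delta_mx i 0 : 'cV[C]_n) = delta_mx 0 i.
  by apply/matrixP => a b; rewrite adjE !mxE; case: eqP; case: eqP => //= _ _; rewrite ?rmorph1 ?rmorph0.
by rewrite -rowE -colE !mxE.
Qed.
Lemma bil_adj n (A : 'M[C]_n) x y : bil (adj A) x y = Num.conj (bil A y x).
Proof.
rewrite /bil; have -> : adj x *m adj A *m y = adj (adj y *m A *m x).
  by rewrite !adjM adjK mulmxA.
by rewrite adjE.
Qed.

Lemma ge0_im (z : C) : 0 <= z -> im z = 0.
Proof. by rewrite lecE => /andP[/eqP -> _]. Qed.
Lemma ge0_re (z : C) : 0 <= z -> 0 <= re z.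
Proof. by rewrite lecE => /andP[_]. Qed.

Lemma psd_herm n (A : 'M[C]_n) : psd A -> adj A = A.
Proof.
move=> HA; apply/matrixP => i j; rewrite adjE.
set e := fun k : 'I_n => (delta_mx k 0 : 'cV[C]_n).
have Hi : im (bil A (e i) (e i)) = 0 := ge0_im (HA _).
have Hj : im (bil A (e j) (e j)) = 0 := ge0_im (HA _).
have H1 : im (bil A (e i + e j) (e i + e j)) = 0 := ge0_im (HA _).
have H2 : im (bil A (e i + 'i *: e j) (e i + 'i *: e j)) = 0 := ge0_im (HA _).
rewrite !bil_delta in Hi Hj.
rewrite !(bilDl, bilDr, bilZl, bilZr) !bil_delta !ImD Hi Hj in H1 H2.
rewrite !ImM /= ReM /= Hj in H2.
move: H1 H2 Hi Hj; case: (A i j) => a b; case: (A j i) => c d /= H1 H2 _ _.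
rewrite /Num.conj /=.
have e1 : c = a by lra.
have e2 : - d = b by lra.
by rewrite e1 -e2.
Qed.
Lemma bil_shift n (S : 'M[C]_n) (e : R) x y :
  bil (S + (e%:C)%:M) x y = bil S x y + e%:C * (adj x *m y) 0 0.
Proof. by rewrite /bil mulmxDr mulmxDl mul_mx_scalar -scalemxAl mxE [in X in _ + X]mxE. Qed.

Lemma re_bil_psd n (S : 'M[C]_n) x : psd S -> 0 <= re (bil S x x).
Proof. by move=> HS; apply: ge0_re; apply: HS. Qed.

Lemma hs_mulv m n (A : 'M[C]_(m,n)) (y : 'cV[C]_n) :
  hs (A *m y) (A *m y) = re (bil (adj A *m A) y y).
Proof. by rewrite hs_vec /bil adjM !mulmxA. Qed.

Lemma unit_shift n (S : 'M[C]_n) (e : R) : psd S -> 0 < e -> (S + (e%:C)%:M) \in unitmx.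
Proof.
move=> HS e0; rewrite unitmxE unitfE; apply/negP => /det0P [v vn0 vT].
set x := adj v.
have h0 : bil (S + (e%:C)%:M) x x = 0.
  by rewrite /bil /x adjK vT mul0mx mxE.
have : re (bil (S + (e%:C)%:M) x x) = 0 by rewrite h0.
rewrite bil_shift ReD ReMR -hs_vec => H.
have H1 := re_bil_psd x HS; have H2 := hs_ge0 x.
have : hs x x = 0.
  apply/eqP; rewrite eq_le H2 andbT.
  have : e * hs x x <= 0 by lra.
  by rewrite pmulr_rle0.
move=> /hs_eq0 x0; move: vn0; by rewrite -(adjK v) -/x x0 /adj map_mx0 trmx0 eqxx.
Qed.
Lemma trZ n (c : C) (A : 'M[C]_n) : \tr (c *: A) = c * \tr A.
Proof. exact: mxtraceZ. Qed.
Section TB.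
Variables (K N : nat) (M : 'M[C]_(K,N)) (S : 'M[C]_N) (e : R).
Hypotheses (HS : psd S) (HSM : S *m S = adj M *m M) (e0 : 0 < e).
Let T := S + (e%:C)%:M.
Let uT : T \in unitmx := unit_shift HS e0.
Let hS : adj S = S := psd_herm HS.

Lemma contraction (z : 'cV[C]_N) :
  hs (M *m invmx T *m z) (M *m invmx T *m z) <= hs z z.
Proof.
set y := invmx T *m z.
have zE : z = S *m y + e%:C *: y.
  by rewrite -mul_scalar_mx -mulmxDl -/T /y mulKVmx.
rewrite -mulmxA -/y hs_mulv -HSM -{1}hS -hs_mulv.
rewrite [in X in _ <= X]zE !(hsDl, hsDr, hsZl, hsZr).
have h1 : hs (S *m y) y = re (bil S y y) by rewrite hs_vec /bil adjM hS mulmxA.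
rewrite (hsC y) h1; have := re_bil_psd y HS; have := hs_ge0 y.
move=> a b.
have h2 := mulr_ge0 (ltW e0) b; have h3 := mulr_ge0 (ltW e0) (mulr_ge0 (ltW e0) a).
lra.
Qed.

Lemma trS_bound :
  re (\tr S) <= re (\tr (adj M *m (M *m invmx T))) + e * N%:R.
Proof.
have -> : \tr S = \tr (invmx T *m T *m S) by rewrite mulVmx // mul1mx.
have TS : T *m S = S *m S + e%:C *: S by rewrite mulmxDl mul_scalar_mx.
have Sinv : invmx T *m S = 1%:M - e%:C *: invmx T.
  have -> : S = T - (e%:C)%:M by rewrite /T addrK.
  by rewrite mulmxBr mulVmx // mul_mx_scalar.
rewrite -mulmxA TS mulmxDr -scalemxAr Sinv mxtraceD.
rewrite trZ HSM.
rewrite mxtrace_mulC mulmxA ReD ReMR.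
have -> : \tr (1%:M - e%:C *: invmx T) = N%:R - e%:C * \tr (invmx T).
  by rewrite raddfB /= mxtrace1 trZ.
rewrite ReD ReN ReMR Re_nat.
have : 0 <= re (\tr (invmx T)).
  rewrite /mxtrace Re_sum; apply: sumr_ge0 => j _.
  set x := (delta_mx j 0 : 'cV[C]_N).
  have -> : invmx T j j = bil (invmx T) x x by rewrite bil_delta.
  set y := invmx T *m x.
  have xE : x = T *m y by rewrite /y mulKVmx.
  have -> : bil (invmx T) x x = bil T y y.
    rewrite /bil {1}xE adjM xE /T adjD hS.
    have -> : adj ((e%:C)%:M : 'M[C]_N) = (e%:C)%:M.
      by apply/matrixP => a b; rewrite adjE !mxE eq_sym; case: eqP; rewrite ?conjE ?conjc_real ?rmorph0.
    by rewrite -!mulmxA -/T (mulmxA (invmx T)) mulVmx // mul1mx.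
  rewrite bil_shift ReD ReMR -hs_vec; have := re_bil_psd y HS; have := hs_ge0 y.
  move=> a b; have h3 := mulr_ge0 (ltW e0) a; lra.
move=> h; have h3 := mulr_ge0 (ltW e0) (mulr_ge0 (ltW e0) h); lra.
Qed.
End TB.
Lemma tr_sum n I (r : seq I) (Pr : pred I) (F : I -> 'M[C]_n) :
  \tr (\sum_(i <- r | Pr i) F i) = \sum_(i <- r | Pr i) \tr (F i).
Proof. elim/big_rec2: _ => [|i y1 y2 _ IH]; [exact: mxtrace0 | by rewrite mxtraceD IH]. Qed.
Lemma trace_bound K N (M : 'M[C]_(K,N)) (S : 'M[C]_N) k (p : 'I_k -> R)
  (u : 'I_k -> 'cV[C]_K) (v : 'I_k -> 'cV[C]_N) t :
  psd S -> S *m S = adj M *m M -> (forall i, 0 <= p i) ->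
  M = \sum_i (p i)%:C *: (u i *m adj (v i)) -> 0 < t ->
  2 * re (\tr S) <= \sum_i p i * (t * hs (u i) (u i) + t^-1 * hs (v i) (v i)).
Proof.
move=> HS HSM p0 ME t0.
apply/ler_addgt0Pr => e' e'0.
pose e := e' / (2 * (N%:R + 1)).
have e0 : 0 < e by rewrite divr_gt0 // mulr_gt0 // ltr_wpDl.
have eN : 2 * (e * N%:R) <= e'.
  set q := N%:R; have q0 : 0 <= q by [].
  have q1 : q + 1 != 0 by rewrite gt_eqF // ltr_wpDl.
  have -> : 2 * (e * q) = e' * (q / (q + 1)) by rewrite /e; field.
  apply: ler_piMr; [exact: ltW | rewrite ler_pdivrMr ?ltr_wpDl //; lra].
have H1 := trS_bound HS HSM e0.
set W := M *m invmx (S + (e%:C)%:M) in H1.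
have adjME : adj M = \sum_i (p i)%:C *: (v i *m adj (u i)).
  rewrite ME adj_sum; apply: eq_bigr => i _.
  by rewrite adjZ adjM adjK conjE conjc_real.
have H2 : re (\tr (adj M *m W)) = \sum_i p i * hs (u i) (W *m v i).
  rewrite adjME mulmx_suml tr_sum Re_sum; apply: eq_bigr => i _.
  by rewrite -scalemxAl trZ ReMR /hs -mulmxA mxtrace_mulC mulmxA.
have H3 : forall i, 2 * hs (u i) (W *m v i) <= t * hs (u i) (u i) + t^-1 * hs (v i) (v i).
  move=> i; apply: le_trans (hs_CS (u i) (W *m v i) t0) _.
  rewrite lerD2l; apply: ler_wpM2l; first by rewrite invr_ge0 ltW.
  exact: (contraction HS HSM e0).
have H4 : 2 * re (\tr (adj M *m W)) <= \sum_i p i * (t * hs (u i) (u i) + t^-1 * hs (v i) (v i)).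
  rewrite H2 mulr_sumr; apply: ler_sum => i _.
  by rewrite mulrCA ler_wpM2l.
lra.
Qed.
Lemma real_disc (a b Z : R) : 0 <= a -> 0 <= b -> 0 <= Z ->
  (forall s, 0 <= a - 2 * s * Z + s ^+ 2 * Z * b) -> Z <= a * b.
Proof.
move=> a0 b0 Z0 H.
have [b_gt0|] := ltrP 0 b.
  have := H b^-1; have bn : b != 0 by rewrite gt_eqF.
  have -> : a - 2 * b^-1 * Z + b^-1 ^+ 2 * Z * b = (a * b - Z) / b by field.
  by rewrite pmulr_lge0 ?invr_gt0 // subr_ge0.
move=> ble; have b00 : b = 0 by apply/eqP; rewrite eq_le ble b0.
rewrite b00 mulr0; have [Zgt0|] := ltrP 0 Z; last by [].
have := H ((a + 1) / Z); have Zn : Z != 0 by rewrite gt_eqF.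
rewrite b00 mulr0 addr0.
have -> : a - 2 * ((a + 1) / Z) * Z = - a - 2 by field.
lra.
Qed.

Lemma psd_entry n (A : 'M[C]_n) i j : psd A ->
  re (A i j) ^+ 2 + im (A i j) ^+ 2 <= re (A i i) * re (A j j).
Proof.
move=> HA; have hA := psd_herm HA.
have Aji : A j i = Num.conj (A i j) by rewrite -{1}hA adjE.
set e := fun k : 'I_n => (delta_mx k 0 : 'cV[C]_n).
have Ha : 0 <= re (A i i) by rewrite -bil_delta; apply: re_bil_psd.
have Hb : 0 <= re (A j j) by rewrite -bil_delta; apply: re_bil_psd.
apply: real_disc => //; first by rewrite addr_ge0 ?sqr_ge0.
move=> s.
have := re_bil_psd (e i + ((- s)%:C * Num.conj (A i j)) *: e j) HA.
rewrite !(bilDl, bilDr, bilZl, bilZr) !bil_delta Aji.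
have Hij : im (A i i) = 0 by rewrite -bil_delta; apply: (ge0_im (HA _)).
have Hjj : im (A j j) = 0 by rewrite -bil_delta; apply: (ge0_im (HA _)).
move: Hij Hjj; case: (A i i) => a1 a2; case: (A j j) => b1 b2; case: (A i j) => p q.
move=> h1 h2; rewrite /= in h2; rewrite /Num.conj /= h2.
move=> H; nra.
Qed.

Lemma state_hs_le1 n (A : 'M[C]_n) : is_state A -> hs A A <= 1.
Proof.
move=> [HA trA].
have -> : 1 = re (\tr A) * re (\tr A) by rewrite trA mulr1.
rewrite hsE /mxtrace Re_sum mulr_suml; apply: ler_sum => i _.
rewrite mulr_sumr; apply: ler_sum => j _; rewrite -!expr2; exact: psd_entry.
Qed.
Lemma sum_tens (V : nmodType) m n (F : 'I_(m * n) -> V) :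
  \sum_(k < m * n) F k = \sum_(i < m) \sum_(j < n) F (mxtens_index (i, j)).
Proof.
rewrite pair_big /=.
rewrite (reindex (@mxtens_index m n)) /=; last first.
  by exists (@mxtens_unindex m n) => k _; rewrite (mxtens_indexK, mxtens_unindexK).
by apply: eq_bigr => -[i j].
Qed.

Lemma adj_scal n (c : R) : adj ((c%:C)%:M : 'M[C]_n) = (c%:C)%:M.
Proof.
by apply/matrixP => a b; rewrite adjE !mxE eq_sym; case: eqP; rewrite ?conjE ?conjc_real ?rmorph0.
Qed.

Lemma hs_scal n (c : R) (B : 'M[C]_n) : hs ((c%:C)%:M) B = c * re (\tr B).
Proof. by rewrite /hs adj_scal mul_scalar_mx trZ ReMR. Qed.

Lemma Re_mulrn (x : C) k : re (x *+ k) = re x *+ k.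
Proof. by elim: k => [|k IH]; rewrite ?mulr0n // !mulrS ReD IH. Qed.

Lemma hs_shift n (c : R) (A B : 'M[C]_n) :
  hs (A - (c%:C)%:M) (B - (c%:C)%:M)
  = hs A B - c * re (\tr A) - c * re (\tr B) + c ^+ 2 * n%:R.
Proof.
rewrite hsBl !hsBr [hs A ((c%:C)%:M)]hsC !hs_scal mxtrace_scalar.
rewrite Re_mulrn /= -mulr_natr; ring.
Qed.

Lemma im_real (x : C) : Num.conj x = x -> im x = 0.
Proof. case: x => a b /= [] h; lra. Qed.
Section MUMb.
Variables (d : nat) (kappa : R) (P : 'I_d.+1 -> 'I_d -> 'M[C]_d) (sig : 'M[C]_d).
Hypotheses (HP : is_MUM kappa P) (Hs : is_state sig).

Lemma mum_d2 : (1 < d)%N.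
Proof.
case: HP => [[k1 k2] _ _ _ _].
case: (posnP d) => [d0|].
  have := Hs.2; rewrite /mxtrace big1 => [/eqP|i]; first by rewrite eq_sym oner_eq0.
  by case: i => m hm; exfalso; move: hm; rewrite d0.
case: d P sig HP Hs k1 k2 => [//|[|d']] //= _ _ _ _ k1 k2 _.
by move: (lt_le_trans k1 k2); rewrite invr1 ltxx.
Qed.

Lemma theta_real b n : Num.conj (\tr (P b n *m sig)) = \tr (P b n *m sig).
Proof.
case: HP => [_ [Ppsd _] _ _ _].
by rewrite -tr_adj adjM (psd_herm Hs.1) (psd_herm (Ppsd b n)) mxtrace_mulC.
Qed.

Let r : R := (d%:R)^-1.
Let X b n := P b n - (r%:C)%:M.
Let Y := sig - (r%:C)%:M.
Let z b n := re (\tr (P b n *m sig)) - r.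
Let gam := (1 - kappa) / (d%:R - 1) - r.
Let del := kappa - r - gam.

Lemma dR : (d%:R : R) != 0.
Proof. by rewrite pnatr_eq0 -lt0n ltnW // mum_d2. Qed.
Lemma dR1 : (d%:R : R) - 1 != 0.
Proof. by rewrite subr_eq0 pnatr_eq1 gtn_eqF // mum_d2. Qed.
Lemma rd : r ^+ 2 * d%:R = r.
Proof. by rewrite /r expr2 -mulrA mulVf ?dR // mulr1. Qed.
Lemma trP b n : re (\tr (P b n)) = 1.
Proof. by case: HP => [_ _ Ptr _ _]; rewrite Ptr. Qed.
Lemma trs : re (\tr sig) = 1.
Proof. by rewrite Hs.2. Qed.
Lemma hermP b n : adj (P b n) = P b n.
Proof. by case: HP => [_ [Ppsd _] _ _ _]; apply: psd_herm. Qed.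

Lemma zE b n : hs (X b n) Y = z b n.
Proof.
rewrite /X /Y hs_shift trP trs rd (hs_tr _ (hermP b n)) /z; ring.
Qed.

Lemma XXE b n b' n' : hs (X b n) (X b' n') =
  if b == b' then gam + (n == n')%:R * del else 0.
Proof.
rewrite /X hs_shift !trP rd (hs_tr _ (hermP b n)).
case: HP => [_ _ _ [PP1 PP2] PP3].
case: eqP => [<-|/eqP bb]; last by rewrite PP3 // ReR /r; ring.
case: eqP => [<-|/eqP nn]; first by rewrite PP1 ReR /del /gam /=; ring.
by rewrite PP2 // ReR /gam /=; ring.
Qed.

Lemma YYE : hs Y Y = hs sig sig - r.
Proof. by rewrite /Y hs_shift trs rd; ring. Qed.

Lemma sumz b : \sum_n z b n = 0.
Proof.
case: HP => [_ [_ Psum] _ _ _].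
rewrite /z big_split /= -Re_sum -tr_sum -mulmx_suml Psum mul1mx trs.
by rewrite sumr_const card_ord -mulr_natr /r mulNr mulVf ?dR // subrr.
Qed.

Let Q := \sum_b \sum_n z b n ^+ 2.
Let Z := \sum_b \sum_n (z b n)%:C *: X b n.

Lemma ZY : hs Z Y = Q.
Proof.
rewrite /Z hs_suml; apply: eq_bigr => b _; rewrite hs_suml; apply: eq_bigr => n _.
by rewrite hsZl zE expr2.
Qed.

Lemma XZ b n : hs (X b n) Z = del * z b n.
Proof.
rewrite /Z hs_sumr (bigD1 b) //= [X in _ + X]big1 => [|b' bb']; last first.
  rewrite hs_sumr big1 // => n' _; by rewrite hsZr XXE eq_sym (negPf bb') mulr0.
rewrite addr0 hs_sumr.
transitivity (\sum_n' (gam * z b n' + (n == n')%:R * (del * z b n'))).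
  by apply: eq_bigr => n' _; rewrite hsZr XXE eqxx; ring.
rewrite big_split /= -mulr_sumr sumz mulr0 add0r (bigD1 n) //= eqxx mul1r big1 ?addr0 //.
by move=> n' nn; rewrite eq_sym (negPf nn) mul0r.
Qed.

Lemma ZZ : hs Z Z = del * Q.
Proof.
rewrite {1}/Z hs_suml /Q mulr_sumr; apply: eq_bigr => b _.
rewrite hs_suml mulr_sumr; apply: eq_bigr => n _; rewrite hsZl XZ; ring.
Qed.

Lemma Qbound : Q <= kappa - r.
Proof.
have [[k1 k2] _ _ _ _] := HP.
have d2 := mum_d2.
have dpos : (1 : R) < d%:R by rewrite ltr1n.
have d1 := dR1; have d0 := dR.
have delE : del = (kappa * d%:R - 1) / (d%:R - 1).
  by rewrite /del /gam /r; field; rewrite d0 d1.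
have kd : 1 < kappa * d%:R.
  have dgt0 : (0:R) < d%:R := lt_trans ltr01 dpos.
  by move: k1; rewrite -(ltr_pM2r dgt0) mulVf.
have del0 : 0 < del by rewrite delE divr_gt0 // subr_gt0.
have tpos : 0 < del^-1 by rewrite invr_gt0.
have CS := hs_CS Z Y tpos.
rewrite ZY ZZ YYE invrK mulrA mulVf ?gt_eqF // mul1r in CS.
have h1 := state_hs_le1 Hs.
have h2 : del * (hs sig sig - r) <= del * (1 - r) by apply: ler_wpM2l; [exact: ltW | rewrite lerD2r].
have h3 : del * (1 - r) = kappa - r by rewrite delE /r; field; rewrite d0 d1.
lra.
Qed.

Definition thvec : 'cV[C]_(d.+1 * d) :=
  \col_k \tr (P (mxtens_unindex k).1 (mxtens_unindex k).2 *m sig).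

Lemma thvecE b n : thvec (mxtens_index (b, n)) 0 = \tr (P b n *m sig).
Proof. by rewrite /thvec mxE mxtens_indexK. Qed.

Lemma mum_bound : hs thvec thvec <= 1 + kappa.
Proof.
rewrite hsE sum_tens.
apply: (@le_trans _ _ (Q + \sum_(b < d.+1) \sum_(n < d) (2 * r * z b n + r ^+ 2))); last first.
  have -> : \sum_(b < d.+1) \sum_(n < d) (2 * r * z b n + r ^+ 2) = d.+1%:R * r.
    transitivity (\sum_(b < d.+1) r); last by rewrite sumr_const card_ord mulr_natl.
    apply: eq_bigr => b _.
    rewrite big_split /= -mulr_sumr sumz mulr0 add0r sumr_const card_ord -mulr_natr.
    by rewrite rd.
  have := Qbound; have : (d%:R : R) * r = 1 by rewrite /r mulfV ?dR.
  rewrite -addn1 natrD; move=> h1 h2; rewrite mulrDl mul1r; lra.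
rewrite le_eqVlt; apply/orP; left; apply/eqP.
rewrite /Q -big_split; apply: eq_bigr => b _; rewrite -big_split; apply: eq_bigr => n _.
rewrite big_ord1 thvecE (im_real (theta_real b n)) /z /=; ring.
Qed.
End MUMb.
Lemma tr_tens m n (A : 'M[C]_m) (B : 'M[C]_n) : \tr (A *t B) = \tr A * \tr B.
Proof.
rewrite /mxtrace sum_tens mulr_suml; apply: eq_bigr => i _.
rewrite mulr_sumr; apply: eq_bigr => j _; by rewrite tensmxE.
Qed.

Lemma ptraceB_sep dA dB k (p : 'I_k -> R) (s : 'I_k -> 'M[C]_dA) (t : 'I_k -> 'M[C]_dB) :
  (forall i, \tr (t i) = 1) ->
  ptraceB (\sum_i (p i)%:C *: (s i *t t i)) = \sum_i (p i)%:C *: s i.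
Proof.
move=> Ht; apply/matrixP => a a'; rewrite /ptraceB !mxE summxE.
under eq_bigr do rewrite summxE.
rewrite exchange_big /=; apply: eq_bigr => i _.
transitivity (\sum_(j < dB) (p i)%:C * (s i a a' * t i j j)).
  by apply: eq_bigr => j _; rewrite mxE tensmxE.
by rewrite -mulr_sumr -mulr_sumr -/(mxtrace (t i)) Ht mulr1 mxE.
Qed.

Lemma ptraceA_sep dA dB k (p : 'I_k -> R) (s : 'I_k -> 'M[C]_dA) (t : 'I_k -> 'M[C]_dB) :
  (forall i, \tr (s i) = 1) ->
  ptraceA (\sum_i (p i)%:C *: (s i *t t i)) = \sum_i (p i)%:C *: t i.
Proof.
move=> Hs; apply/matrixP => a a'; rewrite /ptraceA !mxE summxE.
under eq_bigr do rewrite summxE.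
rewrite exchange_big /=; apply: eq_bigr => i _.
transitivity (\sum_(j < dA) (p i)%:C * (t i a a' * s i j j)).
  by apply: eq_bigr => j _; rewrite mxE tensmxE [s i j j * _]mulrC.
by rewrite -mulr_sumr -mulr_sumr -/(mxtrace (s i)) Hs mulr1 mxE.
Qed.

Lemma thvec_lin d (P : 'I_d.+1 -> 'I_d -> 'M[C]_d) k (p : 'I_k -> R) (s : 'I_k -> 'M[C]_d) j :
  thvec P (\sum_i (p i)%:C *: s i) j 0 = \sum_i (p i)%:C * thvec P (s i) j 0.
Proof.
rewrite /thvec mxE mulmx_sumr tr_sum; apply: eq_bigr => i _.
by rewrite -scalemxAr trZ mxE.
Qed.

Lemma Jmat_sep dA dB (P : 'I_dA.+1 -> 'I_dA -> 'M[C]_dA) (Q : 'I_dB.+1 -> 'I_dB -> 'M[C]_dB)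
  k (p : 'I_k -> R) (s : 'I_k -> 'M[C]_dA) (t : 'I_k -> 'M[C]_dB) a b :
  Jmat P Q (\sum_i (p i)%:C *: (s i *t t i)) a b
  = \sum_i (p i)%:C * (thvec P (s i) a 0 * thvec Q (t i) b 0).
Proof.
rewrite /Jmat mxE mulmx_sumr tr_sum; apply: eq_bigr => i _.
by rewrite -scalemxAr trZ tensmx_mul tr_tens !mxE.
Qed.
Lemma sum_block k m1 m2 n1 n2 (A : 'I_k -> 'M[C]_(m1,n1)) (B : 'I_k -> 'M[C]_(m1,n2))
  (Cc : 'I_k -> 'M[C]_(m2,n1)) (D : 'I_k -> 'M[C]_(m2,n2)) :
  \sum_i block_mx (A i) (B i) (Cc i) (D i)
  = block_mx (\sum_i A i) (\sum_i B i) (\sum_i Cc i) (\sum_i D i).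
Proof.
apply/matrixP => a b; rewrite -(splitK a) -(splitK b).
case: (split a) => a'; case: (split b) => b' /=;
rewrite ?(block_mxEul, block_mxEur, block_mxEdl, block_mxEdr) !summxE; apply: eq_bigr => i _;
by rewrite ?(block_mxEul, block_mxEur, block_mxEdl, block_mxEdr).
Qed.

Lemma adj_col m1 m2 n (a : 'M[C]_(m1,n)) (b : 'M[C]_(m2,n)) :
  adj (col_mx a b) = row_mx (adj a) (adj b).
Proof. by rewrite /adj map_col_mx tr_col_mx. Qed.

Lemma ent_uv m n (x : 'cV[C]_m) (y : 'cV[C]_n) a b :
  (x *m adj y) a b = x a 0 * Num.conj (y b 0).
Proof. by rewrite !mxE big_ord1 adjE. Qed.

Lemma hs_col m1 m2 (x : 'cV[C]_m1) (y : 'cV[C]_m2) :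
  hs (col_mx x y) (col_mx x y) = hs x x + hs y y.
Proof.
rewrite !hsE big_split_ord /=; congr (_ + _); apply: eq_bigr => i _; apply: eq_bigr => j _;
by rewrite ?col_mxEu ?col_mxEd.
Qed.

Lemma hs_const l (c : R) : hs (const_mx c%:C : 'cV[C]_l) (const_mx c%:C) = l%:R * c ^+ 2.
Proof.
rewrite hsE; under eq_bigr do rewrite big_ord1 !mxE /= mulr0 addr0.
by rewrite sumr_const card_ord mulr_natl expr2.
Qed.

Lemma sum_pC k (p : 'I_k -> R) (x : C) : \sum_i p i = 1 -> \sum_i (p i)%:C * x = x.
Proof. by move=> H; rewrite -mulr_suml -rmorph_sum H mul1r. Qed.
Lemma thvec_real d kappa (P : 'I_d.+1 -> 'I_d -> 'M[C]_d) sig j :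
  is_MUM kappa P -> is_state sig -> Num.conj (thvec P sig j 0) = thvec P sig j 0.
Proof. by move=> HP Hs; rewrite /thvec mxE; apply: theta_real HP Hs _ _. Qed.

Lemma Mmat_sep dA dB (P : 'I_dA.+1 -> 'I_dA -> 'M[C]_dA) (Q : 'I_dB.+1 -> 'I_dB -> 'M[C]_dB)
  (mu nu : R) l k (p : 'I_k -> R) (s : 'I_k -> 'M[C]_dA) (t : 'I_k -> 'M[C]_dB) :
  \sum_i p i = 1 -> (forall i, \tr (s i) = 1) -> (forall i, \tr (t i) = 1) ->
  (forall i j, Num.conj (thvec Q (t i) j 0) = thvec Q (t i) j 0) ->
  Mmat P Q mu nu l (\sum_i (p i)%:C *: (s i *t t i))
  = \sum_i (p i)%:C *: (col_mx (const_mx mu%:C : 'cV[C]_l) (thvec P (s i))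
                        *m adj (col_mx (const_mx nu%:C : 'cV[C]_l) (thvec Q (t i)))).
Proof.
move=> p1 Hs Ht Hr.
under [RHS]eq_bigr do rewrite adj_col mul_col_row scale_block_mx.
rewrite sum_block /Mmat; congr block_mx; apply/matrixP => a b; rewrite ?summxE.
- rewrite mxE; under eq_bigr do rewrite mxE ent_uv !mxE conjE conjc_real.
  by rewrite sum_pC // rmorphM.
- rewrite !mxE ptraceA_sep // mulmx_sumr tr_sum mulr_sumr; apply: eq_bigr => i _.
  rewrite mxE ent_uv Hr -scalemxAr trZ /thvec !mxE; ring.
- rewrite !mxE ptraceB_sep // mulmx_sumr tr_sum mulr_sumr; apply: eq_bigr => i _.
  rewrite mxE ent_uv -scalemxAr trZ /thvec !mxE conjE conjc_real; ring.
- rewrite Jmat_sep; apply: eq_bigr => i _.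
  by rewrite [RHS]mxE ent_uv Hr.
Qed.
End S.

Theorem corollary2 (R : realType) (dA dB : nat) (kA kB : R)
  (P : 'I_dA.+1 -> 'I_dA -> 'M[R[i]]_dA) (Q : 'I_dB.+1 -> 'I_dB -> 'M[R[i]]_dB)
  (mu nu : R) (l : nat) (rho : 'M[R[i]]_(dA * dB)) :
  is_MUM kA P -> is_MUM kB Q -> (0 < l)%N ->
  is_state rho -> separable rho ->
  forall S : 'M[R[i]]_(l + dB.+1 * dB),
    psd_sqrt_of S (adj (Mmat P Q mu nu l rho) *m Mmat P Q mu nu l rho) ->
    \tr S <= (Num.sqrt ((l%:R * mu ^+ 2 + 1 + kA) * (l%:R * nu ^+ 2 + 1 + kB)))%:C.
Proof.
move=> HA HB l0 Hrho [k [p [s [t [p0 p1 Hst rhoE]]]]] S [HS HSM].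
set a := l%:R * mu ^+ 2 + 1 + kA; set b := l%:R * nu ^+ 2 + 1 + kB.
pose u i := col_mx (const_mx mu%:C : 'cV[R[i]]_l) (thvec P (s i)).
pose v i := col_mx (const_mx nu%:C : 'cV[R[i]]_l) (thvec Q (t i)).
have kA0 : 0 < kA.
  by case: HA => [[k1 _] _ _ _ _]; apply: le_lt_trans k1; rewrite invr_ge0.
have kB0 : 0 < kB.
  by case: HB => [[k1 _] _ _ _ _]; apply: le_lt_trans k1; rewrite invr_ge0.
have lm : 0 <= l%:R * mu ^+ 2 by rewrite mulr_ge0 ?sqr_ge0.
have ln : 0 <= l%:R * nu ^+ 2 by rewrite mulr_ge0 ?sqr_ge0.
have a0 : 0 < a by rewrite /a; lra.
have b0 : 0 < b by rewrite /b; lra.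
have Hu : forall i, hs (u i) (u i) <= a.
  move=> i; rewrite /u hs_col hs_const /a -addrA lerD2l.
  exact: mum_bound HA (Hst i).1.
have Hv : forall i, hs (v i) (v i) <= b.
  move=> i; rewrite /v hs_col hs_const /b -addrA lerD2l.
  exact: mum_bound HB (Hst i).2.
have ME : Mmat P Q mu nu l rho = \sum_i (p i)%:C *: (u i *m adj (v i)).
  rewrite rhoE; apply: Mmat_sep => //.
  - by move=> i; case: (Hst i) => [[_ ->] _].
  - by move=> i; case: (Hst i) => [_ [_ ->]].
  - by move=> i j; apply: thvec_real HB (Hst i).2.
set sa := Num.sqrt a; set sb := Num.sqrt b.
have sa0 : 0 < sa by rewrite sqrtr_gt0.
have sb0 : 0 < sb by rewrite sqrtr_gt0.
have saa : sa * sa = a by rewrite -expr2 sqr_sqrtr // ltW.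
have sbb : sb * sb = b by rewrite -expr2 sqr_sqrtr // ltW.
set tt := sb / sa.
have tt0 : 0 < tt by rewrite divr_gt0.
have TB := trace_bound HS HSM p0 ME tt0.
have H2 : \sum_i p i * (tt * hs (u i) (u i) + tt^-1 * hs (v i) (v i))
          <= \sum_i p i * (tt * a + tt^-1 * b).
  apply: ler_sum => i _; apply: ler_wpM2l; first exact: p0.
  apply: lerD; apply: ler_wpM2l; rewrite ?invr_ge0 ?(ltW tt0) ?Hu ?Hv //.
have H3 : \sum_i p i * (tt * a + tt^-1 * b) = 2 * (sa * sb).
  rewrite -mulr_suml p1 mul1r /tt -saa -sbb.
  have san : sa != 0 by rewrite gt_eqF.
  have sbn : sb != 0 by rewrite gt_eqF.
  by field; rewrite ?san ?sbn.
have Hre : complex.Re (\tr S) <= Num.sqrt (a * b).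
  have H4 : 2 * complex.Re (\tr S) <= 2 * (sa * sb) by rewrite -H3; exact: le_trans TB H2.
  rewrite sqrtrM ?(ltW a0) // -/sa -/sb; lra.
have Him : complex.Im (\tr S) = 0.
  rewrite /mxtrace Im_sum big1 // => i _; rewrite -bil_delta; exact: ge0_im (HS _).
by rewrite lecE /= Him eqxx Hre.
Qed.
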